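(* If $n\ge1$ and $0\le m\le n$, then $\operatorname{diam}(Y_{n,m})=\lfloor n(m+1)/2\rfloor$.
   Context: For integers $n\ge1$, $m\ge0$, the Yoke graph $Y_{n,m}$ is the simple graph whose vertices are the tuples $v=(v_0,\dots,v_{m+1})$ with $v_0,v_{m+1}\in\mathbb{Z}_n$, $v_1,\dots,v_m\in\{0,1\}$, $\sum_{i=0}^{m+1}v_i\equiv0\pmod n$; $u\sim v$ iff there is $0\le i\le m$ with $u_j=v_j$ for $j\notin\{i,i+1\}$ and either ($u_i=v_i+1$, $u_{i+1}=v_{i+1}-1$) or ($u_i=v_i-1$, $u_{i+1}=v_{i+1}+1$), bucket entries (indices $0,m+1$) computed mod $n$. *)

(* Defs.v *)
From mathcomp Require Import all_boot.
Set Implicit Arguments. Unset Strict Implicit. Unset Printing Implicit Defensive.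

(* Raw data of a Yoke-graph vertex (v_0, v_1..v_m, v_{m+1}):
   v_0, v_{m+1} in Z_n (as 'I_n), v_1..v_m in {0,1} (as bool). *)
Definition yraw (n m : nat) := ('I_n * {ffun 'I_m -> bool} * 'I_n)%type.

Definition ycoord n m (v : yraw n m) (j : nat) : nat :=
  if j == 0 then nat_of_ord v.1.1
  else if j <= m then
    (if insub (j.-1) is Some k then nat_of_bool (v.1.2 k) else 0)
  else nat_of_ord v.2.

Definition yvalid n m (v : yraw n m) : bool :=
  (\sum_(j < m.+2) ycoord v j) %% n == 0.

Definition yvertex n m := {v : yraw n m | yvalid v}.

Definition is_bucket m (j : nat) := (j == 0) || (j == m.+1).

Definition yinc n m (j : nat) (a b : nat) : bool :=
  if is_bucket m j then a == (b + 1) %% n else a == b + 1.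

Definition yadj n m : rel (yvertex n m) := fun u v =>
  (val u != val v) &&
  [exists i : 'I_m.+1,
     [forall j : 'I_m.+2, (j != i :> nat) && (j != i.+1 :> nat) ==>
        (ycoord (val u) j == ycoord (val v) j)] &&
     ((yinc n m i (ycoord (val u) i) (ycoord (val v) i) &&
       yinc n m i.+1 (ycoord (val v) i.+1) (ycoord (val u) i.+1)) ||
      (yinc n m i (ycoord (val v) i) (ycoord (val u) i) &&
       yinc n m i.+1 (ycoord (val u) i.+1) (ycoord (val v) i.+1)))].

Definition walk_len (T : eqType) (e : rel T) (x y : T) (k : nat) : Prop :=
  exists p : seq T, [/\ size p = k, path e x p & last x p = y].

(* d is the diameter: max over pairs of the graph distance
   (min walk length); in particular the graph is connected. *)
Definition is_diameter (T : eqType) (e : rel T) (d : nat) : Prop :=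
  (forall x y : T, exists2 k, k <= d & walk_len e x y k) /\
  (exists x y : T, forall k, walk_len e x y k -> d <= k).

(* Main.v *)
Require Import Defs.
From mathcomp Require Import all_boot all_algebra zify.
Import GRing.Theory Num.Theory.
Set Implicit Arguments. Unset Strict Implicit. Unset Printing Implicit Defensive.

Section Y.
Variables (n m : nat).
Hypothesis n_gt0 : (0 < n)%N.

Local Notation X v := (ycoord (val v)).

Lemma X0lt (v : yvertex n m) : X v 0 < n.
Proof. by rewrite /ycoord /=. Qed.

Lemma Xlast (v : yvertex n m) : X v m.+1 < n.
Proof. by rewrite /ycoord /= ltnn. Qed.

Lemma Xmid (v : yvertex n m) j : 0 < j <= m -> X v j <= 1.
Proof.
case/andP=> h1 h2; rewrite /ycoord h2; case: j h1 h2 => // j _ _ /=.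
by case: insubP => // k _ _; case: (_ k).
Qed.

Lemma Xsum (v : yvertex n m) : (\sum_(j < m.+2) X v j) %% n = 0.
Proof. by apply/eqP; case: v. Qed.

Lemma realize (h : nat -> nat) : h 0 < n -> h m.+1 < n ->
  (forall j, 0 < j <= m -> h j <= 1) -> (\sum_(j < m.+2) h j) %% n = 0 ->
  exists w : yvertex n m, forall j, j <= m.+1 -> X w j = h j.
Proof.
move=> h0 hl hmid hs.
pose r : yraw n m := ((Ordinal h0, [ffun k : 'I_m => h k.+1 == 1]), Ordinal hl).
have E : forall j, j <= m.+1 -> ycoord r j = h j.
  move=> j hj; rewrite /ycoord /=; case: j hj => [|j] hj //=.
  case: (ltnP j m) => hjm.
    rewrite (insubT (fun k => k < m) hjm) /= ffunE; have := hmid j.+1; rewrite hjm => /(_ isT).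
    by case: (h j.+1) => [|[|]].
  by have -> : j = m by lia.
have vr : yvalid r.
  rewrite /yvalid (eq_bigr (fun j : 'I_m.+2 => h j)) ?hs // => j _.
  by apply: E; rewrite -ltnS.
by exists (exist _ r vr) => j hj /=; apply: E.
Qed.

Lemma Xinj (v w : yvertex n m) :
  (forall j, j <= m.+1 -> X v j = X w j) -> v = w.
Proof.
move=> H; apply: val_inj.
case: v w H => [[[a x] b] /= _] [[[a' x'] b'] _] /= H.
have h0 := H 0 isT; rewrite /ycoord /= in h0.
have hl := H m.+1 (leqnn _); rewrite /ycoord /= ltnn in hl.
have hx : x = x'.
  apply/ffunP => k; have := H k.+1 (ltnW (ltn_ord k)).
  rewrite /ycoord /= ltn_ord valK.
  by case: (x k); case: (x' k).
by rewrite hx (ord_inj h0) (ord_inj hl).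
Qed.

Lemma adjE (v w : yvertex n m) : yadj v w -> exists i, i <= m /\
  (forall j, j <= m.+1 -> j != i -> j != i.+1 -> X v j = X w j) /\
  ((yinc n m i (X v i) (X w i) && yinc n m i.+1 (X w i.+1) (X v i.+1)) ||
   (yinc n m i (X w i) (X v i) && yinc n m i.+1 (X v i.+1) (X w i.+1))).
Proof.
case/andP=> _ /existsP [i /andP [/forallP Hf Hd]].
exists i; split; first by rewrite -ltnS ltn_ord.
split => // j hj h1 h2.
have hj' : j < m.+2 by rewrite ltnS.
by have := Hf (Ordinal hj'); rewrite /= h1 h2 /= => /eqP.
Qed.

Lemma adjI (v w : yvertex n m) i : val v != val w -> i <= m ->
  (forall j, j <= m.+1 -> j != i -> j != i.+1 -> X v j = X w j) ->
  ((yinc n m i (X v i) (X w i) && yinc n m i.+1 (X w i.+1) (X v i.+1)) ||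
   (yinc n m i (X w i) (X v i) && yinc n m i.+1 (X v i.+1) (X w i.+1))) ->
  yadj v w.
Proof.
move=> hne hi hj hd; rewrite /yadj hne /=.
have hi' : i < m.+1 by [].
apply/existsP; exists (Ordinal hi'); rewrite /= hd andbT.
apply/forallP => j; apply/implyP => /andP [h1 h2].
by rewrite hj // -ltnS ltn_ord.
Qed.


Lemma Xbucket (v : yvertex n m) j : j <= m.+1 -> is_bucket m j -> X v j < n.
Proof.
move=> hj; rewrite /is_bucket; case/orP => /eqP ->; [exact: X0lt | exact: Xlast].
Qed.

Lemma sum_upd N (g h : nat -> nat) i : i < N -> (forall j, j != i -> g j = h j) ->
  \sum_(j < N) g j + h i = \sum_(j < N) h j + g i.
Proof.
move=> hi H.
rewrite (bigD1 (Ordinal hi)) //= [Y in _ = Y + _](bigD1 (Ordinal hi)) //=.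
rewrite (eq_bigr (fun j : 'I_N => h j)); first lia.
move=> j hj; apply: H; move: hj; apply: contra => /eqP e; apply/eqP/val_inj.
by [].
Qed.

Definition decb a := if a == 0 then n.-1 else a.-1.
Definition incb a := if a.+1 == n then 0 else a.+1.
Definition decp j a := if is_bucket m j then decb a else a.-1.
Definition incp j a := if is_bucket m j then incb a else a.+1.

Lemma incbE b : b < n -> (b + 1) %% n = incb b.
Proof.
rewrite /incb addn1 => hb; case: eqP => [->|h]; first by rewrite modnn.
by rewrite modn_small //; lia.
Qed.

Lemma decbE a : a < n -> (decb a + 1) %% n = a.
Proof.
rewrite /decb => ha; case: eqP => [->|h].
  have -> : n.-1 + 1 = n by lia.
  by rewrite modnn.
by rewrite modn_small //; lia.
Qed.

Lemma yinc_inc j b : (is_bucket m j -> b < n) -> yinc n m j (incp j b) b.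
Proof.
rewrite /yinc /incp; case: (is_bucket m j) => h; first by rewrite incbE ?h.
by rewrite addn1.
Qed.

Lemma yinc_dec j a : (is_bucket m j -> a < n) -> (~~ is_bucket m j -> a = 1) ->
  yinc n m j a (decp j a).
Proof.
rewrite /yinc /decp; case: (is_bucket m j) => h1 h2; first by rewrite decbE ?h1.
by rewrite h2.
Qed.

Lemma decinc p q a b : (is_bucket m p -> a < n) -> (is_bucket m q -> b < n) ->
  (is_bucket m p || (a == 1)) -> (is_bucket m q || (b == 0)) ->
  (decp p a + incp q b = a + b) \/ (decp p a + incp q b + n = a + b) \/
  (decp p a + incp q b = a + b + n).
Proof.
rewrite /decp /incp /decb /incb.
case: (is_bucket m p); case: (is_bucket m q) => /= h1 h2 h3 h4.
- have := h1 isT; have := h2 isT; case: eqP; case: eqP; lia.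
- have := h1 isT; move/eqP: h4 => ->; case: eqP; lia.
- have := h2 isT; move/eqP: h3 => ->; case: eqP; lia.
- move/eqP: h3 => ->; move/eqP: h4 => ->; lia.
Qed.

Lemma move_vertex (v : yvertex n m) p q : p <= m.+1 -> q <= m.+1 -> p != q ->
  (is_bucket m p || (X v p == 1)) -> (is_bucket m q || (X v q == 0)) ->
  exists w : yvertex n m, [/\ X w p = decp p (X v p), X w q = incp q (X v q) &
    forall j, j <= m.+1 -> j != p -> j != q -> X w j = X v j].
Proof.
move=> hp hq hpq tp fq.
have bp := Xbucket v hp; have bq := Xbucket v hq.
have decp_lt : is_bucket m p -> decp p (X v p) < n.
  move=> b; have := bp b; rewrite /decp b /decb; case: eqP; lia.
have incp_lt : is_bucket m q -> incp q (X v q) < n.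
  move=> b; have := bq b; rewrite /incp b /incb; case: eqP; lia.
pose h j := if j == p then decp p (X v p) else if j == q then incp q (X v q) else X v j.
have hb : forall j, j <= m.+1 -> is_bucket m j -> h j < n.
  move=> j hj b; rewrite /h; case: eqP => [e|_]; first by subst; exact: decp_lt.
  case: eqP => [e|_]; first by subst; exact: incp_lt.
  exact: Xbucket.
have H0 : h 0 < n by apply: hb; rewrite /is_bucket ?eqxx.
have Hl : h m.+1 < n by apply: hb; rewrite /is_bucket ?eqxx ?orbT.
have Hm : forall j, 0 < j <= m -> h j <= 1.
  move=> j hj; have nb : ~~ is_bucket m j by rewrite /is_bucket; lia.
  rewrite /h; case: eqP => [e|_].
    subst; move: tp; rewrite /decp (negbTE nb) /= => /eqP ->; done.
  case: eqP => [e|_].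
    subst; move: fq; rewrite /incp (negbTE nb) /= => /eqP ->; done.
  exact: Xmid.
have Hs : (\sum_(j < m.+2) h j) %% n = 0.
  pose h1 j := if j == p then decp p (X v p) else X v j.
  have H1 : forall j, j != p -> h1 j = X v j by move=> j hj; rewrite /h1 (negbTE hj).
  have H2 : forall j, j != q -> h j = h1 j.
    by move=> j hj; rewrite /h /h1 (negbTE hj); case: eqP.
  have e1 := sum_upd (hp : p < m.+2) H1.
  have e2 := sum_upd (hq : q < m.+2) H2.
  have h1p : h1 p = decp p (X v p) by rewrite /h1 eqxx.
  have h1q : h1 q = X v q by rewrite /h1 eq_sym (negbTE hpq).
  have hq' : h q = incp q (X v q) by rewrite /h eq_sym (negbTE hpq) eqxx.
  have hs := Xsum v.
  clearbody h1 h.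
  case: (decinc bp bq tp fq) => [E|[E|E]].
  + have -> : \sum_(j < m.+2) h j = \sum_(j < m.+2) X v j by lia.
    exact: hs.
  + have E' : \sum_(j < m.+2) h j + n = \sum_(j < m.+2) X v j by lia.
    by move: hs; rewrite -E' modnDr.
  + have E' : \sum_(j < m.+2) h j = \sum_(j < m.+2) X v j + n by lia.
    by rewrite E' modnDr.
have [w hw] := realize H0 Hl Hm Hs.
exists w; split.
- by rewrite hw // /h eqxx.
- by rewrite hw // /h eq_sym (negbTE hpq) eqxx.
- by move=> j hj h1 h2; rewrite hw // /h (negbTE h1) (negbTE h2).
Qed.


Definition carries (x y : nat -> nat) (f : nat -> int) : Prop :=
  (n%:Z %| ((x 0%N)%:Z - f 0%N - (y 0%N)%:Z)%R)%Z /\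
  forall j, 0 < j <= m -> ((y j)%:Z = (x j)%:Z + f j.-1 - f j)%R.

Definition cost (f : nat -> int) : nat := \sum_(j < m.+1) `|f j|%N.

Definition fupd (f : nat -> int) i (d : int) : nat -> int :=
  fun j => if j == i then (f j + d)%R else f j.

Lemma cost_upd f g i : i <= m -> (forall j, j != i -> g j = f j) ->
  cost g + `|f i|%N = cost f + `|g i|%N.
Proof.
move=> hi H; have hi' : i < m.+1 by [].
rewrite /cost (bigD1 (Ordinal hi')) //= [Y in _ = Y + _](bigD1 (Ordinal hi')) //=.
rewrite (eq_bigr (fun j : 'I_m.+1 => `|f j|%N)); first lia.
move=> j hj; rewrite H //; move: hj; apply: contra => /eqP e; apply/eqP/val_inj.
Qed.

Lemma cost0 f : cost f = 0 -> forall j, j <= m -> f j = 0%R.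
Proof.
move=> h j hj; have hj' : j < m.+1 by [].
by move: h; rewrite /cost (bigD1 (Ordinal hj')) //= => h; lia.
Qed.

Lemma dvd_small (a b : nat) : a < n -> b < n -> (n%:Z %| (a%:Z - b%:Z)%R)%Z -> a = b.
Proof.
rewrite dvdzE => ha hb hd.
case: (posnP `|(a%:Z - b%:Z)%R|%N) => [h|h]; first lia.
have := dvdn_leq h hd; lia.
Qed.

Lemma flow0 (v u : yvertex n m) f : carries (X v) (X u) f -> cost f = 0 -> v = u.
Proof.
move=> [h0 hm] hc; have f0 := cost0 hc.
have mid : forall j, 0 < j <= m -> X v j = X u j.
  move=> j hj; have := hm j hj; have a := f0 j.-1 _; have b := f0 j _; lia.
have e0 : X v 0 = X u 0.
  apply: dvd_small (X0lt v) (X0lt u) _.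
  by move: h0; rewrite (f0 0) // GRing.subr0.
have el : X v m.+1 = X u m.+1.
  have sv := Xsum v; have su := Xsum u.
  rewrite big_ord_recr /= in sv; rewrite big_ord_recr /= in su.
  have eS : \sum_(j < m.+1) X v j = \sum_(j < m.+1) X u j.
    apply: eq_bigr => -[[|j] hj] _ //=; apply: mid; lia.
  rewrite eS in sv.
  have : X v m.+1 %% n = X u m.+1 %% n.
    by apply/eqP; rewrite -(eqn_modDl (\sum_(j < m.+1) X u j)); apply/eqP; rewrite sv su.
  by rewrite !modn_small ?Xlast.
apply: Xinj => j hj.
case: j hj => [|j] hj //; case: (ltnP j m) => hjm; first by apply: mid; lia.
by have -> : j = m by lia.
Qed.

Lemma dvdz_n (a : int) : a = Posz n -> (n%:Z %| a)%Z.
Proof. by move->; exact: dvdzz. Qed.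
Lemma dvdz_0 (a : int) : a = 0%R -> (n%:Z %| a)%Z.
Proof. by move->; exact: dvdz0. Qed.

Definition moved (x x' : nat -> nat) i : Prop :=
  [/\ forall j, j <= m.+1 -> j != i -> j != i.+1 -> x' j = x j,
      i = 0 -> (n%:Z %| ((x' 0%N)%:Z + 1 - (x 0%N)%:Z)%R)%Z,
      0 < i -> x' i + 1 = x i &
      i < m -> x' i.+1 = x i.+1 + 1].

Lemma yinc_moved (x x' : nat -> nat) i : i <= m -> x' 0 < n ->
  (forall j, j <= m.+1 -> j != i -> j != i.+1 -> x' j = x j) ->
  yinc n m i (x i) (x' i) -> yinc n m i.+1 (x' i.+1) (x i.+1) -> moved x x' i.
Proof.
move=> hi hx0 ho h1 h2; split => //.
- move=> i0; subst i; move: h1; rewrite /yinc /is_bucket eqxx /= => /eqP ->.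
  rewrite incbE // /incb; case: eqP => e.
    by apply: dvdz_n; lia.
  by apply: dvdz_0; lia.
- move=> ip; move: h1; rewrite /yinc /is_bucket.
  have -> : (i == 0) = false by lia.
  have -> : (i == m.+1) = false by lia.
  move=> /eqP; lia.
- move=> im; move: h2; rewrite /yinc /is_bucket /=.
  have -> : (i.+1 == m.+1) = false by lia.
  move=> /eqP; lia.
Qed.

Lemma carries_mv1 x x' y f i : i <= m -> moved x x' i -> carries x y f ->
  carries x' y (fupd f i (-1)).
Proof.
move=> hi [ho h0 hI hI1] [c0 cm]; split.
- rewrite /fupd; case: (eqVneq 0 i) => [e|ne].
    subst i; have d := h0 erefl.
    have -> : ((x' 0%N)%:Z - (f 0%N + -1) - (y 0%N)%:Z =
      ((x 0%N)%:Z - f 0%N - (y 0%N)%:Z) + ((x' 0%N)%:Z + 1 - (x 0%N)%:Z))%R by lia.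
    exact: rpredD.
  by rewrite ho // eq_sym.
- move=> j hj; have := cm j hj; rewrite /fupd.
  case: (eqVneq j i) => [e|nji]; case: (eqVneq j.-1 i) => [e'|nj1].
  + lia.
  + subst j; have := hI (proj1 (andP hj)); lia.
  + have ej : j = i.+1 by lia.
    subst j; have := hI1 (proj2 (andP hj)); lia.
  + rewrite ho; lia.
Qed.

Lemma carries_mv2 x x' y f i : i <= m -> moved x x' i -> carries x' y f ->
  carries x y (fupd f i 1).
Proof.
move=> hi [ho h0 hI hI1] [c0 cm]; split.
- rewrite /fupd; case: (eqVneq 0 i) => [e|ne].
    subst i; have d := h0 erefl.
    have -> : ((x 0%N)%:Z - (f 0%N + 1) - (y 0%N)%:Z =
      ((x' 0%N)%:Z - f 0%N - (y 0%N)%:Z) - ((x' 0%N)%:Z + 1 - (x 0%N)%:Z))%R by lia.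
    exact: rpredB.
  by rewrite -ho // eq_sym.
- move=> j hj; have := cm j hj; rewrite /fupd.
  case: (eqVneq j i) => [e|nji]; case: (eqVneq j.-1 i) => [e'|nj1].
  + lia.
  + subst j; have := hI (proj1 (andP hj)); lia.
  + have ej : j = i.+1 by lia.
    subst j; have := hI1 (proj2 (andP hj)); lia.
  + rewrite ho; lia.
Qed.


Lemma find_edge (g : nat -> int) (P : nat -> bool) : P 0 ->
  (forall j, 0 < j <= m -> ~~ P j -> (g j <= g j.-1)%R) ->
  (forall j, 0 < j <= m -> P j -> (g j.-1 <= g j)%R) ->
  forall j, j <= m -> (0 < g j)%R ->
  exists i, [/\ i <= m, (0 < g i)%R, P i & (i < m -> ~~ P i.+1)].
Proof.
move=> P0 H1 H2.
have L : forall j, j <= m -> (0 < g j)%R -> (j < m -> ~~ P j.+1) ->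
    exists i, [/\ i <= m, (0 < g i)%R, P i & (i < m -> ~~ P i.+1)].
  elim=> [|j IH] hj gj hn; first by exists 0.
  case: (boolP (P j.+1)) => Pj; first by exists j.+1.
  have hj' : 0 < j.+1 <= m by lia.
  have := H1 j.+1 hj' Pj => /= hg.
  apply: IH => //; [lia | lia].
have R : forall k j, j + k = m -> (0 < g j)%R ->
    exists i, [/\ i <= m, (0 < g i)%R, P i & (i < m -> ~~ P i.+1)].
  elim=> [|k IH] j hjk gj.
    by apply: (L j); [lia | done | move=> h; exfalso; lia].
  case: (boolP (P j.+1)) => Pj.
    have hj' : 0 < j.+1 <= m by lia.
    have := H2 j.+1 hj' Pj => /= hg.
    apply: (IH j.+1); lia.
  by apply: (L j); [lia | done | done].
move=> j hj gj; apply: (R (m - j) j) => //; lia.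
Qed.

Lemma stepB (v u : yvertex n m) f N : carries (X v) (X u) f -> cost f = N.+1 ->
  exists w f', [/\ w = v \/ yadj v w, carries (X w) (X u) f' & cost f' = N].
Proof.
move=> hc hN; case: (hc) => [c0 cm].
have [j hj fj] : exists2 j, j <= m & f j != 0%R.
  case: (boolP [exists j : 'I_m.+1, f j != 0%R]) => [/existsP [j hj]|/existsPn H].
    by exists j => //; rewrite -ltnS.
  suff : cost f = 0 by lia.
  by rewrite /cost big1 // => j _; have := H j; rewrite negbK => /eqP ->.
have Xu1 := Xmid u; have Xv1 := Xmid v.
case: (ltrgtP (f j) 0%R) => [fneg|fpos|f0]; last by rewrite f0 eqxx in fj.
- pose g k := (- f (m - k)%N)%R.
  pose P k := (k == 0) || (X v (m.+1 - k) == 1).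
  have H1 : forall k, 0 < k <= m -> ~~ P k -> (g k <= g k.-1)%R.
    move=> k hk; rewrite /P negb_or => /andP [_ nk].
    have hp : 0 < m.+1 - k <= m by lia.
    have := cm _ hp; have := Xv1 _ hp; have := Xu1 _ hp; rewrite /g.
    have -> : (m.+1 - k).-1 = m - k by lia.
    have -> : m - k.-1 = m.+1 - k by lia.
    lia.
  have H2 : forall k, 0 < k <= m -> P k -> (g k.-1 <= g k)%R.
    move=> k hk; rewrite /P; have -> : (k == 0) = false by lia.
    rewrite orFb => /eqP e.
    have hp : 0 < m.+1 - k <= m by lia.
    have := cm _ hp; have := Xu1 _ hp; rewrite /g e.
    have -> : (m.+1 - k).-1 = m - k by lia.
    have -> : m - k.-1 = m.+1 - k by lia.
    lia.
  have hj' : m - j <= m by lia.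
  have gj : (0 < g (m - j)%N)%R.
    rewrite /g; have -> : m - (m - j) = j by lia.
    lia.
  have [i' [hi' gi' Pi' Pn']] := find_edge (erefl : P 0) H1 H2 hj' gj.
  have [i ei] : exists i, i = m - i' by eexists.
  have hi : i <= m by lia.
  have fi : (f i < 0)%R.
    move: gi'; rewrite /g -ei; lia.
  have tp : is_bucket m i.+1 || (X v i.+1 == 1).
    move: Pi'; rewrite /P; case/orP => [/eqP e | e].
      by rewrite /is_bucket ei e subn0 eqxx orbT.
    have -> : i.+1 = m.+1 - i' by lia.
    by rewrite e orbT.
  have fq : is_bucket m i || (X v i == 0).
    case: (ltnP i' m) => h.
      move: (Pn' h); rewrite /P negb_or => /andP [_ h'].
      have hp : 0 < i <= m by lia.
      have := Xv1 _ hp; move: h'.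
      have -> : m.+1 - i'.+1 = i by lia.
      by move=> h1 h2; apply/orP; right; lia.
    have -> : i = 0 by lia.
    done.
  have hp1 : i.+1 <= m.+1 by lia.
  have hq1 : i <= m.+1 by lia.
  have hpq : i.+1 != i by lia.
  have [w [wp wq wo]] := move_vertex hp1 hq1 hpq tp fq.
  have y1 : yinc n m i (X w i) (X v i).
    by rewrite wq; apply: yinc_inc => b; exact: Xbucket.
  have y2 : yinc n m i.+1 (X v i.+1) (X w i.+1).
    rewrite wp; apply: yinc_dec => [b|nb]; first exact: Xbucket.
    by move: tp; rewrite (negbTE nb) orFb => /eqP.
  have ho : forall k, k <= m.+1 -> k != i -> k != i.+1 -> X v k = X w k.
    by move=> k hk h1 h2; rewrite wo.
  have mv : moved (X w) (X v) i := yinc_moved hi (X0lt v) ho y1 y2.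
  exists w, (fupd f i 1); split.
  + case: (eqVneq (val v) (val w)) => [e|ne]; first by left; apply/val_inj.
    right; apply: (adjI ne hi) => [k hk h1 h2|]; first by rewrite wo.
    by rewrite y1 y2 orbT.
  + exact: carries_mv2 hi mv hc.
  + have Hu : forall k, k != i -> fupd f i 1 k = f k.
      by move=> k hk; rewrite /fupd (negbTE hk).
    have := cost_upd hi Hu; rewrite /fupd eqxx; lia.
- pose P k := (k == 0) || (X v k == 1).
  have H1 : forall k, 0 < k <= m -> ~~ P k -> (f k <= f k.-1)%R.
    move=> k hk; rewrite /P negb_or => /andP [_ nk].
    have := cm _ hk; have := Xv1 _ hk; have := Xu1 _ hk; lia.
  have H2 : forall k, 0 < k <= m -> P k -> (f k.-1 <= f k)%R.
    move=> k hk; rewrite /P; have -> : (k == 0) = false by lia.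
    rewrite orFb => /eqP e.
    have := cm _ hk; have := Xu1 _ hk; rewrite e; lia.
  have [i [hi fi Pi Pn]] := find_edge (erefl : P 0) H1 H2 hj fpos.
  have tp : is_bucket m i || (X v i == 1).
    by move: Pi; rewrite /P /is_bucket; case/orP => ->; rewrite ?orbT.
  have fq : is_bucket m i.+1 || (X v i.+1 == 0).
    case: (ltnP i m) => h.
      move: (Pn h); rewrite /P negb_or => /andP [_ h'].
      have hp : 0 < i.+1 <= m by lia.
      have := Xv1 _ hp; move: h'.
      by move=> h1 h2; apply/orP; right; lia.
    have -> : i = m by lia.
    by rewrite /is_bucket eqxx orbT.
  have hp1 : i <= m.+1 by lia.
  have hq1 : i.+1 <= m.+1 by lia.
  have hpq : i != i.+1 by lia.
  have [w [wp wq wo]] := move_vertex hp1 hq1 hpq tp fq.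
  have y1 : yinc n m i (X v i) (X w i).
    rewrite wp; apply: yinc_dec => [b|nb]; first exact: Xbucket.
    by move: tp; rewrite (negbTE nb) orFb => /eqP.
  have y2 : yinc n m i.+1 (X w i.+1) (X v i.+1).
    by rewrite wq; apply: yinc_inc => b; exact: Xbucket.
  have mv : moved (X v) (X w) i := yinc_moved hi (X0lt w) wo y1 y2.
  exists w, (fupd f i (-1)); split.
  + case: (eqVneq (val v) (val w)) => [e|ne]; first by left; apply/val_inj.
    right; apply: (adjI ne hi) => [k hk h1 h2|]; first by rewrite wo.
    by rewrite y1 y2.
  + exact: carries_mv1 hi mv hc.
  + have Hu : forall k, k != i -> fupd f i (-1) k = f k.
      by move=> k hk; rewrite /fupd (negbTE hk).
    have := cost_upd hi Hu; rewrite /fupd eqxx; lia.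
Qed.

Lemma stepC (v w u : yvertex n m) f : yadj v w -> carries (X w) (X u) f ->
  exists2 f', carries (X v) (X u) f' & cost f' <= (cost f).+1.
Proof.
case/adjE => i [hi [ho hd]] hc.
have ho' : forall j, j <= m.+1 -> j != i -> j != i.+1 -> X w j = X v j.
  by move=> j hj h1 h2; rewrite ho.
case/orP: hd => /andP [h1 h2].
- have mv : moved (X v) (X w) i := yinc_moved hi (X0lt w) ho' h1 h2.
  exists (fupd f i 1); first exact: carries_mv2 hi mv hc.
  have Hu : forall k, k != i -> fupd f i 1 k = f k.
    by move=> k hk; rewrite /fupd (negbTE hk).
  have := cost_upd hi Hu; rewrite /fupd eqxx; lia.
- have mv : moved (X w) (X v) i := yinc_moved hi (X0lt v) ho h1 h2.
  exists (fupd f i (-1)); first exact: carries_mv1 hi mv hc.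
  have Hu : forall k, k != i -> fupd f i (-1) k = f k.
    by move=> k hk; rewrite /fupd (negbTE hk).
  have := cost_upd hi Hu; rewrite /fupd eqxx; lia.
Qed.

Lemma walk_up (u : yvertex n m) N : forall v f, carries (X v) (X u) f ->
  cost f = N -> exists2 k, k <= N & walk_len (@yadj n m) v u k.
Proof.
elim: N => [|N IH] v f hc hN.
  by exists 0 => //; exists [::]; split => //=; rewrite (flow0 hc hN).
have [w [f' [hw hc' hN']]] := stepB hc hN.
have [k hk [p [hp1 hp2 hp3]]] := IH w f' hc' hN'.
case: hw => [e|a].
  by subst w; exists k => //; [lia | exists p].
exists k.+1; first lia.
by exists (w :: p); split => //=; [rewrite hp1 | rewrite a hp2].
Qed.

Lemma walk_low (v : yvertex n m) p : path (@yadj n m) v p ->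
  exists2 f, carries (X v) (X (last v p)) f & cost f <= size p.
Proof.
elim: p v => [|w p IH] v /=.
  move=> _; exists (fun _ => 0%R).
    by split => [|j hj]; [apply: dvdz_0; lia | lia].
  by rewrite /cost big1.
case/andP => a hp; have [f hc hf] := IH w hp.
have [f' hc' hf'] := stepC a hc.
by exists f' => //; lia.
Qed.


Lemma sumc N c : \sum_(j < N) c = N * c.
Proof. by elim: N => [|N IH]; rewrite ?big_ord0 // big_ord_recr /= IH; lia. Qed.

Lemma distsum M k : k <= M -> 2 * \sum_(j < M.+1) ((j - k) + (k - j)) <= M * M.+1.
Proof.
elim: M k => [|M IH] k hk.
  by rewrite big_ord_recr big_ord0 /=; lia.
rewrite big_ord_recr /=.
case: (ltnP M k) => hMk.
  have ek : k = M.+1 by lia.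
  subst k.
  have -> : \sum_(j < M.+1) (j - M.+1 + (M.+1 - j)) =
            \sum_(j < M.+1) ((j - M + (M - j)) + 1).
    by apply: eq_bigr => -[j hj] _ /=; lia.
  rewrite big_split /= sumc; have := IH M (leqnn M).
  set S := \sum_(j < M.+1) (j - M + (M - j)); nia.
have := IH k hMk; set S := \sum_(j < M.+1) (j - k + (k - j)); nia.
Qed.

Section Flow.
Variables (v u : yvertex n m).

Definition cc j : int :=
  (\sum_(k < j) ((X v k.+1)%:Z - (X u k.+1)%:Z))%R.

Lemma cc0 : cc 0 = 0%R.
Proof. by rewrite /cc big_ord0. Qed.

Lemma ccS j : cc j.+1 = (cc j + (X v j.+1)%:Z - (X u j.+1)%:Z)%R.
Proof. by rewrite /cc big_ord_recr /= GRing.addrA. Qed.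

Lemma cc_lip1 j : j < m -> (`|(cc j.+1 - cc j)%R| <= 1)%N.
Proof.
move=> hj; have hp : 0 < j.+1 <= m by lia.
have := Xmid v hp; have := Xmid u hp; rewrite ccS; lia.
Qed.

Lemma cc_lip d j : j + d <= m -> (`|(cc (j + d) - cc j)%R| <= d)%N.
Proof.
elim: d => [|d IH] hjd; first by rewrite addn0; lia.
have hjd1 : j + d < m by lia.
have hjd2 : j + d <= m by lia.
have := IH hjd2; have := cc_lip1 hjd1; rewrite addnS; lia.
Qed.

Lemma cc_dist j k : j <= m -> k <= m ->
  (`|(cc j - cc k)%R| <= (j - k) + (k - j))%N.
Proof.
move=> hj hk; case: (leqP j k) => h.
  have := @cc_lip (k - j) j ltac:(lia); have -> : j + (k - j) = k by lia.
  lia.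
have := @cc_lip (j - k) k ltac:(lia); have -> : k + (j - k) = j by lia.
lia.
Qed.

Lemma carries_t (t : int) : (n%:Z %| ((X v 0%N)%:Z - t - (X u 0%N)%:Z)%R)%Z ->
  carries (X v) (X u) (fun j => (t + cc j)%R).
Proof.
move=> h; split; first by rewrite cc0 GRing.addr0.
move=> [|j] hj //; rewrite ccS [j.+1.-1]/=; lia.
Qed.

Lemma good_flow : m <= n -> exists2 f, carries (X v) (X u) f & 2 * cost f <= n * m.+1.
Proof.
move=> hmn.
pose r : int := ((X v 0%N)%:Z - (X u 0%N)%:Z)%R.
case: (boolP [exists k : 'I_m.+1, (n%:Z %| (- cc k - r)%R)%Z]).
  case/existsP => k hk.
  exists (fun j => (- cc k + cc j)%R).
    apply: carries_t.
    have -> : ((X v 0%N)%:Z - - cc k - (X u 0%N)%:Z = - (- cc k - r))%R by rewrite /r; lia.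
    by rewrite rpredN.
  have hkm : k <= m by rewrite -ltnS.
  have := distsum hkm.
  have : cost (fun j => (- cc k + cc j)%R) <= \sum_(j < m.+1) ((j - k) + (k - j)).
    apply: leq_sum => j _.
    have hj : j <= m by rewrite -ltnS.
    have := cc_dist hj hkm; lia.
  move=> h1 h2; have : m * m.+1 <= n * m.+1 by rewrite leq_mul2r hmn orbT.
  lia.
move/existsPn => H.
have nz : (Posz n) != 0%R by lia.
have r0 := modz_ge0 r nz.
have r1 := @ltz_pmod r (Posz n) ltac:(lia).
have rq := divz_eq r (Posz n).
move: r0 r1 rq; set q := (r %/ (Posz n))%Z; set rho := (r %% (Posz n))%Z => r0 r1 rq.
have ndv : forall k, k <= m -> ~~ ((Posz n) %| (- cc k - r)%R)%Z.
  by move=> k hk; have := H (Ordinal (hk : k < m.+1)).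
have neq : forall k, k <= m -> (- cc k != rho)%R /\ (- cc k != rho - n%:Z)%R.
  move=> k hk; split; apply/negP => /eqP e; have := ndv k hk.
    have -> : (- cc k - r = (- q) * n%:Z)%R by rewrite e; lia.
    by rewrite dvdz_mull ?dvdzz.
  have -> : (- cc k - r = (- q - 1) * n%:Z)%R by rewrite e; lia.
  by rewrite dvdz_mull ?dvdzz.
have rho0 : rho != 0%R.
  by have [h _] := neq 0 (leq0n m); move: h; rewrite cc0; lia.
have bnd : forall j, j <= m -> (rho - n%:Z < - cc j < rho)%R.
  elim=> [|j IH] hj; first by rewrite cc0; lia.
  have := IH (ltnW hj); have := cc_lip1 hj; have [h1 h2] := neq _ hj; lia.
pose f1 := fun j => ((rho - n%:Z) + cc j)%R.
pose f2 := fun j => (rho + cc j)%R.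
have c1 : carries (X v) (X u) f1.
  apply: carries_t.
  have -> : ((X v 0%N)%:Z - (rho - n%:Z) - (X u 0%N)%:Z = (q + 1) * n%:Z)%R.
    by move: rq; rewrite /r; lia.
  by rewrite dvdz_mull ?dvdzz.
have c2 : carries (X v) (X u) f2.
  apply: carries_t.
  have -> : ((X v 0%N)%:Z - rho - (X u 0%N)%:Z = q * n%:Z)%R.
    by move: rq; rewrite /r; lia.
  by rewrite dvdz_mull ?dvdzz.
have s12 : cost f1 + cost f2 = m.+1 * n.
  rewrite /cost -big_split /= -sumc; apply: eq_bigr => j _.
  have hj : j <= m by rewrite -ltnS.
  have := bnd j hj; rewrite /f1 /f2; lia.
case: (leqP (cost f1) (cost f2)) => h.
  by exists f1 => //; lia.
by exists f2 => //; lia.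
Qed.

End Flow.


Lemma complete (a : nat) (b : nat -> bool) : a < n ->
  exists w : yvertex n m, X w 0 = a /\ forall j, 0 < j <= m -> X w j = b j.
Proof.
move=> ha.
pose h0 j := if j == 0 then a else nat_of_bool (b j).
pose S := \sum_(j < m.+1) h0 j.
pose fx := (n - S %% n) %% n.
pose h j := if j == m.+1 then fx else h0 j.
have H0 : h 0 < n by [].
have Hl : h m.+1 < n by rewrite /h eqxx ltn_pmod.
have Hm : forall j, 0 < j <= m -> h j <= 1.
  move=> j hj; rewrite /h /h0.
  have -> : (j == m.+1) = false by lia.
  have -> : (j == 0) = false by lia.
  by case: (b j).
have Hs : (\sum_(j < m.+2) h j) %% n = 0.
  rewrite big_ord_recr /= {2}/h eqxx.
  have -> : \sum_(j < m.+1) h (widen_ord (leqnSn m.+1) j) = S.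
    apply: eq_bigr => -[j hj] _; rewrite /h /=.
    by have -> : (j == m.+1) = false by lia.
  rewrite /fx modnDmr.
  have hs := ltn_pmod S n_gt0.
  have -> : S + (n - S %% n) = (S %/ n).+1 * n.
    have e := divn_eq S n; rewrite mulSn.
    move: (S %/ n) (S %% n) e hs => Q B e hB; lia.
  by rewrite modnMl.
have [w hw] := realize H0 Hl Hm Hs.
exists w; split; first by rewrite hw.
move=> j hj; rewrite hw; last by lia.
rewrite /h /h0.
have -> : (j == m.+1) = false by lia.
by have -> : (j == 0) = false by lia.
Qed.

Lemma sum_odd N : \sum_(j < N) (odd j : nat) = N./2.
Proof.
elim: N => [|N IH]; first by rewrite big_ord0.
rewrite big_ord_recr /= IH; lia.
Qed.

Lemma lower_pair : exists x y : yvertex n m, forall f,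
  carries (X x) (X y) f -> (n * m.+1) %/ 2 <= cost f.
Proof.
have [x [x0 xm]] := @complete n./2 (fun j => odd n && odd j) ltac:(lia).
have [y [y0 ym]] := @complete 0 (fun j => odd n && ~~ odd j) n_gt0.
exists x, y => f [c0 cm].
have fj : forall j, j <= m -> f j = (f 0%N + (odd n && odd j : nat)%:Z)%R.
  elim=> [|j IH] hj; first by rewrite andbF; lia.
  have hp : 0 < j.+1 <= m by lia.
  have := cm _ hp; rewrite xm // ym // [j.+1.-1]/= IH; last by lia.
  rewrite oddS; case: (odd n); case: (odd j) => /=; lia.
have E : \sum_(j < m.+1) (odd n && odd j : nat) = odd n * (m.+1)./2.
  case: (odd n) => /=; first by rewrite sum_odd; lia.
  by rewrite big1.
have hn : n = n./2 + n./2 + odd n by lia.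
move: c0; rewrite x0 y0 => /dvdzP [q hq].
have [fA|fB] : (Posz n./2 <= f 0%N)%R \/ (f 0%N <= Posz n./2 - Posz n)%R.
  have [h1|h1] : (q <= 0)%R \/ (1 <= q)%R by lia.
    by left; nia.
  by right; nia.
- have : \sum_(j < m.+1) (n./2 + (odd n && odd j : nat)) <= cost f.
    apply: leq_sum => j _; have hj : j <= m by rewrite -ltnS.
    rewrite (fj _ hj); lia.
  rewrite big_split /= sumc E.
  move: hn; case: (odd n) => hn /=; rewrite hn; nia.
- have : \sum_(j < m.+1) (n./2 + odd n) <= cost f + \sum_(j < m.+1) (odd n && odd j : nat).
    rewrite -big_split /=; apply: leq_sum => j _; have hj : j <= m by rewrite -ltnS.
    rewrite (fj _ hj); lia.
  rewrite sumc E.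
  move: hn; case: (odd n) => hn /=; rewrite hn; nia.
Qed.

End Y.

Theorem theorem5p15 (n m : nat) :
  1 <= n -> m <= n -> is_diameter (@yadj n m) ((n * m.+1) %/ 2).
Proof.
move=> hn hm; split.
- move=> x y.
  have [f hc hf] := good_flow hn x y hm.
  have [k hk hw] := walk_up hn hc (erefl (cost m f)).
  exists k => //; apply: leq_trans hk _.
  by rewrite leq_divRL //; lia.
- have [x [y H]] := lower_pair m hn.
  exists x, y => k [p [hs hp hl]].
  have [f hc hf] := walk_low hn hp.
  rewrite hl in hc; have := H f hc; rewrite -hs => h; exact: leq_trans h hf.
Qed.
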